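(* Let $f=1$ and $n>0$. Then for every $c\in\left[\frac{1}{e^n}\left(\frac12+\frac n2+\frac{n^2}{12}\right),\frac12\right]$, the equation $c=\xi_{n,1}(\gamma)$ has a solution $\gamma\in[0,1]$.
   Context: Let $g(x,y)=1$ if $x>y$, $g(x,y)=1/2$ if $x=y$, and $g(x,y)=0$ if $x<y$. For $n>0$, $f\in\mathbb{N}$ and $\gamma\in[0,1]$, define $$\xi_{n,f}(\gamma)=\sum_{D=0}^\infty\sum_{V=0}^\infty \frac{(n\gamma)^D}{e^{n\gamma}D!}\frac{(n(1-\gamma))^V}{e^{n(1-\gamma)}V!}\Big[\sum_{h=0}^D\binom{D}{h}\Big(\tfrac{V+1}{V+1+f}\Big)^h\Big(\tfrac{f}{V+1+f}\Big)^{D-h}g(V+1+h,f+D-h)-\sum_{h=0}^{D+1}\binom{D+1}{h}\Big(\tfrac{V}{V+f}\Big)^h\Big(\tfrac{f}{V+f}\Big)^{D+1-h}g(V+h,f+D+1-h)\Big],$$ with the convention $0^0=1$. Interpretation: $\xi_{n,f}(\gamma)$ is the expected utility gain from voting rather than delegating for a well-behaving agent. The setting has Poisson$(n)$ well-behaving agents, each delegating with probability $\gamma$, and $f$ misbehaving voters who always vote. Delegated votes are assigned uniformly at random to the active voters. The equation $c=\xi_{n,f}(\gamma)$ is the equilibrium indifference condition for voting cost $c$. *)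

(* Defs.v *)
From Stdlib Require Import Reals.
From Coquelicot Require Import Coquelicot.
Open Scope R_scope.

Definition g (x y : nat) : R :=
  if Nat.ltb y x then 1 else if Nat.eqb x y then / 2 else 0.

(* Poisson(lam) probability mass at k:  lam^k / (e^lam k!)  (0^0 = 1 via pow) *)
Definition poisson (lam : R) (k : nat) : R :=
  lam ^ k / (exp lam * INR (Stdlib.Arith.Factorial.fact k)).

Definition bracket (f D V : nat) : R :=
  sum_f_R0 (fun h => Binomial.C D h
              * (INR (V + 1) / INR (V + 1 + f)) ^ h
              * (INR f / INR (V + 1 + f)) ^ (D - h)
              * g (V + 1 + h) (f + D - h)) D
  - sum_f_R0 (fun h => Binomial.C (D + 1) h
              * (INR V / INR (V + f)) ^ h
              * (INR f / INR (V + f)) ^ (D + 1 - h)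
              * g (V + h) (f + (D + 1) - h)) (D + 1).

Definition xi (n : R) (f : nat) (gamma : R) : R :=
  Series (fun D => Series (fun V =>
    poisson (n * gamma) D * poisson (n * (1 - gamma)) V * bracket f D V)).

(* Main.v *)
From Stdlib Require Import Reals Lra Lia.
From Coquelicot Require Import Coquelicot.
Require Import Defs.
Open Scope R_scope.

Lemma series_bound (u M : nat -> R) : (forall k, Rabs (u k) <= M k) -> ex_series M ->
  ex_series u /\ Rabs (Series u) <= Series M.
Proof.
  intros H HM.
  assert (Ha : ex_series (fun k => Rabs (u k))).
  { apply (@ex_series_le R_AbsRing R_CompleteNormedModule _ M); auto. intros k. change (Rabs (Rabs (u k)) <= M k). rewrite Rabs_Rabsolu. auto. }
  split. apply ex_series_Rabs; auto.
  eapply Rle_trans. apply Series_Rabs; auto.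
  apply Series_le; auto. intros k; split; auto. apply Rabs_pos.
Qed.

Lemma sum_cont (u : nat -> R -> R) x0 N : (forall k, continuity_pt (u k) x0) ->
  continuity_pt (fun x => sum_f_R0 (fun k => u k x) N) x0.
Proof.
  intros H. induction N as [|N IH]; simpl. apply H.
  apply (continuity_pt_plus (fun x => sum_f_R0 (fun k => u k x) N) (u (S N))); auto.
Qed.

Lemma series_cont (u : nat -> R -> R) (M : nat -> R) x0 r : 0 < r ->
  (forall k x, Rabs (x - x0) < r -> Rabs (u k x) <= M k) -> ex_series M ->
  (forall k, continuity_pt (u k) x0) ->
  continuity_pt (fun x => Series (fun k => u k x)) x0.
Proof.
  intros Hr Hb HM Hc.
  assert (Hex : forall x, Rabs (x - x0) < r -> ex_series (fun k => u k x)).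
  { intros x Hx. apply (series_bound _ M); auto. }
  assert (Htail : forall N x, Rabs (x - x0) < r ->
     Rabs (Series (fun k => u k x) - sum_f_R0 (fun k => u k x) N) <= Series M - sum_f_R0 M N).
  { intros N x Hx. rewrite (Series_incr_n (fun k => u k x) (S N)); [|lia|auto].
    rewrite (Series_incr_n M (S N)); [|lia|auto]. simpl pred.
    replace (sum_f_R0 (fun k : nat => u k x) N + Series (fun k : nat => u (S N + k)%nat x) -
      sum_f_R0 (fun k : nat => u k x) N) with (Series (fun k : nat => u (S N + k)%nat x)) by ring.
    replace (sum_f_R0 M N + Series (fun k : nat => M (S N + k)%nat) - sum_f_R0 M N)
      with (Series (fun k : nat => M (S N + k)%nat)) by ring.
    apply series_bound. intros; apply Hb; auto.
    apply (ex_series_incr_n M (S N)); auto. }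
  intros eps Heps.
  destruct HM as [SM HSM].
  assert (HL := HSM). 
  assert (Hlim : is_lim_seq (sum_n M) SM) by exact HSM.
  apply is_lim_seq_spec in Hlim.
  destruct (Hlim (mkposreal (eps/3) ltac:(lra))) as [N HN].
  specialize (HN N (le_n _)). simpl in HN. rewrite sum_n_Reals in HN.
  assert (HSer : Series M = SM) by (apply is_series_unique; auto).
  destruct (sum_cont u x0 N Hc (eps/3) ltac:(lra)) as [d [Hd Hd2]].
  exists (Rmin d r). split. apply Rmin_pos; lra.
  intros x [Hdx Hx]. simpl in Hx |- *. unfold R_dist in *.
  assert (Hxd : Rabs (x - x0) < d) by (eapply Rlt_le_trans; [apply Hx| apply Rmin_l]).
  assert (Hxr : Rabs (x - x0) < r) by (eapply Rlt_le_trans; [apply Hx| apply Rmin_r]).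
  assert (H0r : Rabs (x0 - x0) < r) by (rewrite Rminus_diag, Rabs_R0; lra).
  assert (T1 := Htail N x Hxr). assert (T2 := Htail N x0 H0r).
  assert (F : Rabs (sum_f_R0 (fun k : nat => u k x) N - sum_f_R0 (fun k : nat => u k x0) N) < eps/3).
  { destruct (Req_dec x0 x) as [<-|Hne]. rewrite Rminus_diag, Rabs_R0; lra.
    apply (Hd2 x). repeat split; auto. }
  rewrite HSer in T1; rewrite HSer in T2.
  assert (Rabs (sum_f_R0 M N - SM) < eps/3) by exact HN.
  set (a := Series (fun k => u k x)) in *. set (b := Series (fun k => u k x0)) in *.
  set (p := sum_f_R0 (fun k : nat => u k x) N) in *.
  set (q := sum_f_R0 (fun k : nat => u k x0) N) in *.
  apply Rabs_def2 in F. apply Rabs_def2 in H.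
  apply Rabs_le_between in T1. apply Rabs_le_between in T2.
  apply Rabs_def1; lra.
Qed.
Lemma is_series_extR (a b : nat -> R) l : (forall n, a n = b n) -> is_series a l -> is_series b l.
Proof. intros. apply (is_series_ext a); auto. Qed.

Lemma exp_series x : is_series (fun k => x ^ k / INR (Factorial.fact k)) (exp x).
Proof.
  apply (is_series_extR (fun i => / INR (Factorial.fact i) * x ^ i)).
  intros; unfold Rdiv; ring.
  apply is_series_Reals. unfold exp. destruct (exist_exp x) as [l Hl]. simpl. exact Hl.
Qed.

Definition B (n : R) (k : nat) := (2 * n) ^ k / INR (Factorial.fact k) * exp n.

Lemma is_series_scalR c (a : nat -> R) l : is_series a l -> is_series (fun k => c * a k) (c * l).
Proof. intros H. exact (@is_series_scal_l R_AbsRing R_NormedModule c a l H). Qed.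

Lemma B_ex n : ex_series (B n).
Proof.
  exists (exp n * exp (2*n)). unfold B.
  apply (is_series_extR (fun k => exp n * ((2*n)^k / INR (Factorial.fact k)))).
  intros; ring.
  apply is_series_scalR. apply exp_series.
Qed.

Lemma poisson_bound n l k : 0 < n -> - n <= l <= 2 * n -> Rabs (poisson l k) <= B n k.
Proof.
  intros Hn Hl. unfold poisson, B.
  assert (Hf : 0 < INR (Factorial.fact k)) by (apply lt_0_INR, Factorial.lt_O_fact).
  assert (He : 0 < exp l) by apply exp_pos.
  unfold Rdiv. rewrite Rinv_mult. rewrite !Rabs_mult.
  rewrite <- RPow_abs. rewrite (Rabs_right (/ exp l)) by (left; apply Rinv_0_lt_compat; auto).
  rewrite (Rabs_right (/ INR (Factorial.fact k))) by (left; apply Rinv_0_lt_compat; auto).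
  assert (H1 : Rabs l ^ k <= (2*n)^k) by (apply pow_incr; split; [apply Rabs_pos| apply Rabs_le; lra]).
  assert (H2 : / exp l <= exp n).
  { rewrite <- exp_Ropp. destruct (Req_dec (-l) n) as [->|]; [lra|]. left; apply exp_increasing; lra. }
  assert (0 <= / INR (Factorial.fact k)) by (left; apply Rinv_0_lt_compat; auto).
  assert (0 <= / exp l) by (left; apply Rinv_0_lt_compat; auto).
  assert (0 <= Rabs l ^ k) by (apply pow_le, Rabs_pos).
  apply Rle_trans with ((Rabs l ^ k * / INR (Factorial.fact k)) * / exp l). right; ring.
  apply Rle_trans with (((2*n) ^ k * / INR (Factorial.fact k)) * exp n); [|right; ring].
  apply Rmult_le_compat; auto. apply Rmult_le_pos; auto.
  apply Rmult_le_compat_r; auto.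
Qed.

Lemma B_pos n k : 0 < n -> 0 <= B n k.
Proof. intros. unfold B. apply Rmult_le_pos. apply Rdiv_le_0_compat. apply pow_le; lra.
  apply lt_0_INR, Factorial.lt_O_fact. left; apply exp_pos. Qed.

Lemma g_bound x y : 0 <= g x y <= 1.
Proof. unfold g. destruct (Nat.ltb y x); [lra|]. destruct (Nat.eqb x y); lra. Qed.

Lemma C_pos D h : 0 <= Binomial.C D h.
Proof. unfold Binomial.C. apply Rdiv_le_0_compat. apply pos_INR.
  apply Rmult_lt_0_compat; apply lt_0_INR, Factorial.lt_O_fact. Qed.

Lemma binsum_bound D p q (w : nat -> R) : 0 <= p -> 0 <= q -> p + q = 1 ->
  (forall h, 0 <= w h <= 1) ->
  0 <= sum_f_R0 (fun h => Binomial.C D h * p ^ h * q ^ (D - h) * w h) D <= 1.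
Proof.
  intros Hp Hq Hpq Hw.
  assert (HC : forall h, 0 <= Binomial.C D h * p^h * q^(D-h)) by (intros; apply Rmult_le_pos; [apply Rmult_le_pos; [apply C_pos|apply pow_le; auto]| apply pow_le; auto]).
  split.
  - apply cond_pos_sum. intros h. apply Rmult_le_pos; auto. apply Hw.
  - apply Rle_trans with ((p+q)^D); [|rewrite Hpq, pow1; lra].
    rewrite binomial. apply sum_Rle. intros h _.
    rewrite <- (Rmult_1_r (Binomial.C D h * p ^ h * q ^ (D - h))) at 2.
    apply Rmult_le_compat_l; auto. apply Hw.
Qed.

Lemma bracket_bound D V : Rabs (bracket 1 D V) <= 1.
Proof.
  unfold bracket.
  assert (HV := pos_INR V).
  assert (E1 : INR (V + 1 + 1) = INR V + 2) by (rewrite !plus_INR; simpl; ring).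
  assert (E2 : INR (V + 1) = INR V + 1) by (rewrite !plus_INR; simpl; ring).
  assert (A1 := binsum_bound D (INR (V+1) / INR (V+1+1)) (INR 1 / INR (V+1+1))
     (fun h => g (V + 1 + h) (1 + D - h))).
  assert (A2 := binsum_bound (D+1) (INR V / INR (V+1)) (INR 1 / INR (V+1))
     (fun h => g (V + h) (1 + (D + 1) - h))).
  rewrite E1, E2 in A1. rewrite E2 in A2. simpl INR in A1, A2.
  rewrite E1, E2. simpl INR.
  destruct A1 as [A1 A1']; try (apply Rdiv_le_0_compat; lra); try (intros; apply g_bound).
  field; lra.
  destruct A2 as [A2 A2']; try (apply Rdiv_le_0_compat; lra); try (intros; apply g_bound).
  field; lra.
  apply Rabs_le; lra.
Qed.

Definition term (n : R) (D V : nat) (x : R) :=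
  poisson (n * x) D * poisson (n * (1 - x)) V * bracket 1 D V.

Lemma term_cont n D V x0 : continuity_pt (term n D V) x0.
Proof.
  apply continuity_pt_filterlim. apply (@ex_derive_continuous R_AbsRing R_NormedModule).
  unfold term, poisson.
  auto_derive. repeat split; try (apply Rgt_not_eq, Rmult_lt_0_compat; [apply exp_pos| apply lt_0_INR, Factorial.lt_O_fact]).
Qed.

Lemma lam_range n x0 x : 0 < n -> 0 <= x0 <= 1 -> Rabs (x - x0) < 1 ->
  (- n <= n * x <= 2 * n) /\ (- n <= n * (1 - x) <= 2 * n).
Proof. intros Hn H0 Hx. apply Rabs_def2 in Hx. split; split; nra. Qed.

Lemma term_bound n D V x0 x : 0 < n -> 0 <= x0 <= 1 -> Rabs (x - x0) < 1 ->
  Rabs (term n D V x) <= B n D * B n V.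
Proof.
  intros Hn H0 Hx. destruct (lam_range n x0 x Hn H0 Hx) as [L1 L2].
  unfold term. rewrite !Rabs_mult.
  rewrite <- (Rmult_1_r (B n D * B n V)).
  apply Rmult_le_compat; try apply Rabs_pos. apply Rmult_le_pos; apply Rabs_pos.
  apply Rmult_le_compat; try apply Rabs_pos; apply poisson_bound; auto.
  apply bracket_bound.
Qed.

Lemma xi_cont n x0 : 0 < n -> 0 <= x0 <= 1 -> continuity_pt (xi n 1) x0.
Proof.
  intros Hn H0.
  assert (HBe := B_ex n).
  assert (HM : forall D, ex_series (fun V => B n D * B n V)).
  { intros D. destruct HBe as [l Hl]. exists (B n D * l). apply is_series_scalR; auto. }
  unfold xi.
  apply (series_cont (fun D x => Series (fun V => term n D V x)) (fun D => B n D * Series (B n)) x0 1).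
  lra.
  - intros D x Hx. rewrite <- Series_scal_l.
    apply series_bound; auto. intros V. apply (term_bound n D V x0 x); auto.
  - destruct HBe as [l Hl]. exists (l * Series (B n)).
    apply (is_series_extR (fun k => Series (B n) * B n k)). intros; ring.
    rewrite Rmult_comm. apply is_series_scalR; auto.
  - intros D. apply (series_cont (fun V x => term n D V x) (fun V => B n D * B n V) x0 1).
    lra. intros V x Hx. apply (term_bound n D V x0 x); auto. auto.
    intros; apply term_cont.
Qed.
Lemma g_gt x y : (y < x)%nat -> g x y = 1.
Proof. intros H. unfold g. apply Nat.ltb_lt in H. rewrite H. auto. Qed.
Lemma g_lt x y : (x < y)%nat -> g x y = 0.
Proof. intros H. unfold g. assert (Nat.ltb y x = false) by (apply Nat.ltb_ge; lia). rewrite H0.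
  assert (Nat.eqb x y = false) by (apply Nat.eqb_neq; lia). rewrite H1. auto. Qed.
Lemma g_eq x : g x x = / 2.
Proof. unfold g. rewrite Nat.ltb_irrefl, Nat.eqb_refl. auto. Qed.
Lemma C00 : Binomial.C 0 0 = 1. Proof. unfold Binomial.C; simpl; field. Qed.
Lemma C10 : Binomial.C 1 0 = 1. Proof. unfold Binomial.C; simpl; field. Qed.
Lemma C11 : Binomial.C 1 1 = 1. Proof. unfold Binomial.C; simpl; field. Qed.
Lemma br0 V : (3 <= V)%nat -> bracket 1 0 V = 0.
Proof.
intros HV. unfold bracket. cbn [sum_f_R0 Nat.add Nat.sub].
rewrite C00, C10, C11.
rewrite (g_gt (V+1+0)), (g_gt (V+0)), (g_gt (V+1)) by lia.
rewrite !plus_INR. simpl. assert (HV' := pos_INR V). field. lra.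
Qed.
Lemma br00 : bracket 1 0 0 = /2.
Proof. unfold bracket, g, Binomial.C. simpl. field. Qed.
Lemma br01 : bracket 1 0 1 = /2.
Proof. unfold bracket, g, Binomial.C. simpl. field. Qed.
Lemma br02 : bracket 1 0 2 = /6.
Proof. unfold bracket, g, Binomial.C. simpl. field. Qed.

Lemma sum_rev (a : nat -> R) N : sum_f_R0 (fun h => a (N - h)%nat) N = sum_f_R0 a N.
Proof.
  induction N as [|N IH]. simpl. reflexivity.
  rewrite decomp_sum by lia. simpl pred. rewrite tech5.
  replace (S N - 0)%nat with (S N) by lia.
  assert (E : sum_f_R0 (fun i => a (S N - S i)%nat) N = sum_f_R0 (fun h => a (N - h)%nat) N).
  { apply sum_eq. intros; reflexivity. }
  rewrite E, IH. ring.
Qed.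

Lemma g_sym x y : g x y + g y x = 1.
Proof.
  unfold g. destruct (Nat.ltb_spec y x); destruct (Nat.ltb_spec x y);
  destruct (Nat.eqb_spec x y); destruct (Nat.eqb_spec y x); try lia; lra.
Qed.

Lemma symsum D : sum_f_R0 (fun h => Binomial.C D h * g (h+1) (D-h+1)) D = 2 ^ D / 2.
Proof.
  set (S := sum_f_R0 _ D).
  assert (H2 : 2 ^ D = sum_f_R0 (fun h => Binomial.C D h) D).
  { replace 2 with (1+1) by ring. rewrite binomial. apply sum_eq. intros. rewrite !pow1. ring. }
  assert (HS : S = 2 ^ D - S).
  { unfold S at 1. rewrite <- sum_rev. rewrite H2. unfold S. rewrite <- minus_sum.
    apply sum_eq. intros h Hh. replace (D - (D - h))%nat with h by lia.
    rewrite <- pascal_step1 by lia.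
    assert (G := g_sym (D - h + 1) (h + 1)). 
    replace (g (D - h + 1) (h + 1)) with (1 - g (h+1) (D-h+1)) by lra. ring. }
  lra.
Qed.

Lemma brD0 D : bracket 1 D 0 = / 2.
Proof.
  unfold bracket.
  rewrite (sum_eq_R0 (fun h => _ * g (0 + h) (1 + (D + 1) - h))).
  2:{ intros h Hh. destruct h as [|h].
      rewrite (g_lt (0+0)) by lia. ring.
      change (INR 0) with 0. unfold Rdiv. rewrite Rmult_0_l. simpl pow. ring. }
  rewrite (sum_eq _ (fun h => Binomial.C D h * g (h+1) (D-h+1) * (/2)^D)).
  2:{ intros h Hh. replace (0+1+h)%nat with (h+1)%nat by lia.
      replace (1+D-h)%nat with (D-h+1)%nat by lia.
      replace (INR (0+1+1)) with 2 by (simpl; ring). replace (INR (0+1)) with 1 by (simpl; ring).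
      replace (INR 1) with 1 by (simpl; ring).
      assert (P : (1/2)^h * (1/2)^(D-h) = (/2)^D).
      { rewrite <- pow_add. replace (h + (D-h))%nat with D by lia. unfold Rdiv. rewrite Rmult_1_l. reflexivity. }
      transitivity (Binomial.C D h * ((1/2)^h * (1/2)^(D-h)) * g (h + 1) (D - h + 1)). ring.
      rewrite P. ring. }
  rewrite <- scal_sum, symsum. rewrite pow_inv. field. apply pow_nonzero; lra.
Qed.
Lemma sum_const_after (a : nat -> R) N m : (forall k, (N < k)%nat -> a k = 0) -> (N <= m)%nat ->
  sum_f_R0 a m = sum_f_R0 a N.
Proof.
  intros H Hm. induction m as [|m IH].
  replace N with 0%nat by lia. reflexivity.
  destruct (Nat.eq_dec N (S m)) as [->|Hne]. reflexivity.
  rewrite tech5, IH by lia. rewrite H by lia. ring.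
Qed.

Lemma is_series_fin (a : nat -> R) N : (forall k, (N < k)%nat -> a k = 0) -> is_series a (sum_f_R0 a N).
Proof.
  intros H. apply is_series_Reals. intros eps Heps. exists N. intros m Hm.
  rewrite (sum_const_after a N m) by auto. unfold R_dist. rewrite Rminus_diag, Rabs_R0. lra.
Qed.

Lemma poisson00 : poisson 0 0 = 1.
Proof. unfold poisson. rewrite exp_0. simpl. field. Qed.
Lemma poisson0S k : poisson 0 (S k) = 0.
Proof. unfold poisson. simpl pow. unfold Rdiv. ring. Qed.

Lemma xi0 n : xi n 1 0 = / exp n * (1 / 2 + n / 2 + n ^ 2 / 12).
Proof.
  unfold xi. set (L := / exp n * (1 / 2 + n / 2 + n ^ 2 / 12)).
  rewrite Rmult_0_r. replace (n * (1 - 0)) with n by ring.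
  rewrite (Series_ext _ (fun D => match D with O => L | S _ => 0 end)).
  - apply is_series_unique.
    assert (HH := is_series_fin (fun D : nat => match D with O => L | S _ => 0 end) 0).
    simpl in HH. apply HH. intros [|k] Hk; [lia|reflexivity].
  - intros [|D].
    + apply is_series_unique.
      replace L with (sum_f_R0 (fun V => poisson 0 0 * poisson n V * bracket 1 0 V) 2).
      apply is_series_fin. intros k Hk. rewrite br0 by lia. ring.
      simpl sum_f_R0. rewrite poisson00, br00, br01, br02. unfold poisson, L. simpl.
      assert (exp n <> 0) by (apply Rgt_not_eq, exp_pos). field. auto.
    + apply is_series_unique. apply (is_series_extR (fun _ => 0)).
      intros V. rewrite poisson0S. ring.
      assert (HH := is_series_fin (fun _ : nat => 0) 0). simpl in HH. apply HH. auto.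
Qed.

Lemma xi1 n : xi n 1 1 = / 2.
Proof.
  unfold xi. rewrite Rmult_1_r. replace (n * (1 - 1)) with 0 by ring.
  rewrite (Series_ext _ (fun D => (/2 * / exp n) * (n ^ D / INR (Factorial.fact D)))).
  - apply is_series_unique.
    assert (HH := is_series_scalR (/2 * /exp n) _ _ (exp_series n)).
    replace (/2 * /exp n * exp n) with (/2) in HH. exact HH.
    field. apply Rgt_not_eq, exp_pos.
  - intros D. apply is_series_unique.
    replace (/ 2 * / exp n * (n ^ D / INR (Factorial.fact D)))
      with (sum_f_R0 (fun V => poisson n D * poisson 0 V * bracket 1 D V) 0).
    apply is_series_fin. intros [|k] Hk; [lia|]. rewrite poisson0S. ring.
    simpl. rewrite poisson00, brD0. unfold poisson. field.
    repeat split; apply Rgt_not_eq; first [apply exp_pos | apply lt_0_INR, Factorial.lt_O_fact].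
Qed.

Theorem proposition2 (n : R) (hn : 0 < n) (c : R)
  (hc1 : / exp n * (1 / 2 + n / 2 + n ^ 2 / 12) <= c) (hc2 : c <= 1 / 2) :
  exists gamma : R, 0 <= gamma <= 1 /\ c = xi n 1 gamma.
Proof.
  rewrite <- xi0 in hc1. assert (E1 := xi1 n).
  destruct (Req_dec c (xi n 1 0)) as [->|H0]. exists 0; split; [lra|auto].
  destruct (Req_dec c (1/2)) as [->|H1]. exists 1; split; [lra|]. rewrite E1; field.
  destruct (Ranalysis5.IVT_interv (fun x => xi n 1 x - c) 0 1) as [z [Hz Hz2]].
  - intros a Ha. apply continuity_pt_minus. apply xi_cont; auto. apply continuity_pt_const. intros x y; reflexivity.
  - lra.
  - lra.
  - lra.
  - exists z. split; auto. lra.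
Qed.
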